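(* Let $\mathcal{X},\mathcal{Y}$ be finite alphabets and $P_{XY}$ a joint PMF on $\mathcal{X}\times\mathcal{Y}$ with $P_X$ fully supported. Let $(X^N,Y^N)\sim P_{XY}^{\otimes N}$, $M\in\mathbb{N}$, $\beta>0$, $L=\beta\log M$, $N=ML$ (integer constraints ignored), with fragments $\boldsymbol{X}(i)=X_{(i-1)L+1}^{iL}$. Let $\hat X^N\in\arg\max_{\tilde X^N\in\mathcal{A}_L(X^N)}\mathbb{P}[Y^N\mid\tilde X^N]$ be a maximum-likelihood reconstruction, $\mathcal{A}_L(X^N)=\{(\boldsymbol{X}(\pi(1)),\ldots,\boldsymbol{X}(\pi(M))):\pi\in S_M\}$, with fragments $\hat{\boldsymbol{X}}(i)$. Let $\Delta:\mathcal{X}\times\mathcal{X}\to\mathbb{R}_+$ be a distortion measure, extended to fragments by $\Delta(\tilde{\boldsymbol{x}},\bar{\boldsymbol{x}})=\frac1L\sum_{j\in[L]}\Delta(\tilde x_j,\bar x_j)$; for $\delta>0$ let $\Xi_\delta=\frac1M\sum_{i\in[M]}\mathbb{1}\{\Delta(\boldsymbol{X}(i),\hat{\boldsymbol{X}}(i))\geq\delta\}$ and $\mathsf{FP}(\delta,\xi)=\mathbb{P}[\Xi_\delta\geq\xi]$. Define $$d^*_{P_{Y|X}}(\delta)=\min_{Q_{X_1X_2}\in\mathcal{P}(\mathcal{X}^2):\ \Delta(Q_{X_1X_2})\geq\delta} d_{P_{Y|X}}(Q_{X_1X_2}).$$ Assume $\beta<1/H(P_X)$. If $\xi>H(P_X)/d^*_{P_{Y|X}}(\delta)$,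 then $\mathsf{FP}(\delta,\xi)=o(1)$ as $M\to\infty$.
   Context: $d_{P_{Y|X}}(x_1,x_2)=-\log\sum_{y}\sqrt{P_{Y|X}(y|x_1)P_{Y|X}(y|x_2)}$; for a joint PMF $Q_{X_1X_2}$ on $\mathcal{X}^2$, $d_{P_{Y|X}}(Q_{X_1X_2})=\sum_{x_1,x_2}Q_{X_1X_2}(x_1,x_2)d_{P_{Y|X}}(x_1,x_2)$ and $\Delta(Q_{X_1X_2})=\sum_{x_1,x_2}Q_{X_1X_2}(x_1,x_2)\Delta(x_1,x_2)$. $H(P_X)$ is the Shannon entropy (natural logarithms); $\mathcal{P}(\mathcal{X}^2)$ is the probability simplex on $\mathcal{X}^2$. *)

(* Defs.v *)
From HB Require Import structures.
From mathcomp Require Import all_boot all_order all_algebra all_fingroup.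
From mathcomp Require Import all_classical all_reals all_analysis.
Set Implicit Arguments. Unset Strict Implicit. Unset Printing Implicit Defensive.
Import Order.TTheory GRing.Theory Num.Theory.
Local Open Scope ring_scope.

Section Defs.
Context {R : realType} {X Y : finType}.

Definition PX (P : X -> Y -> R) (x : X) : R := \sum_(y : Y) P x y.
Definition PYgX (P : X -> Y -> R) (x : X) (y : Y) : R := P x y / PX P x.
(* Shannon entropy of P_X in nats (ln 0 = 0, so 0 ln 0 = 0) *)
Definition entropyX (P : X -> Y -> R) : R := - \sum_(x : X) PX P x * ln (PX P x).

(* Bhattacharyya coefficient and d_{P_{Y|X}}(x1,x2) = -log BC, +oo when BC = 0 *)
Definition bhat (P : X -> Y -> R) (x1 x2 : X) : R :=
  \sum_(y : Y) Num.sqrt (PYgX P x1 y * PYgX P x2 y).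
Definition dB (P : X -> Y -> R) (x1 x2 : X) : \bar R :=
  if bhat P x1 x2 == 0 then +oo%E else (- ln (bhat P x1 x2))%:E.

Definition is_pmf2 (Q : X * X -> R) : Prop :=
  (forall z, 0 <= Q z) /\ \sum_(z : X * X) Q z = 1.
Definition dQ (P : X -> Y -> R) (Q : X * X -> R) : \bar R :=
  (\sum_(z : X * X) (Q z)%:E * dB P z.1 z.2)%E.
Definition DeltaQ (D : X -> X -> R) (Q : X * X -> R) : R :=
  \sum_(z : X * X) Q z * D z.1 z.2.
(* d^*(delta) = min over Q in P(X^2) with Delta(Q) >= delta of d(Q)
   (infimum in \bar R; +oo if the constraint set is empty) *)
Definition dstar (P : X -> Y -> R) (D : X -> X -> R) (delta : R) : \bar R :=
  ereal_inf [set dQ P Q | Q in [set Q | is_pmf2 Q /\ delta <= DeltaQ D Q]].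

Definition Lfrag (beta : R) (M : nat) : nat := `|Num.ceil (beta * ln (M%:R : R))|%N.

(* An outcome (X^N, Y^N), N = M L, indexed by (fragment i, position k):
   entry (i,k) is the ((i-1)L+k)-th symbol pair. *)
Definition prob {M L : nat} (P : X -> Y -> R) (w : {ffun 'I_M * 'I_L -> X * Y}) : R :=
  \prod_(z : 'I_M * 'I_L) P (w z).1 (w z).2.
(* P[Y^N | tilde X^N] where tilde X(i) = X(pi i) *)
Definition lik {M L : nat} (P : X -> Y -> R) (w : {ffun 'I_M * 'I_L -> X * Y})
  (pi : {perm 'I_M}) : R :=
  \prod_(z : 'I_M * 'I_L) PYgX P (w (pi z.1, z.2)).1 (w z).2.
(* Delta(X(i), hat X(i)) with hat X(i) = X(pi i) *)
Definition fragDist {M L : nat} (D : X -> X -> R) (w : {ffun 'I_M * 'I_L -> X * Y})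
  (pi : {perm 'I_M}) (i : 'I_M) : R :=
  (L%:R)^-1 * \sum_(k < L) D (w (i, k)).1 (w (pi i, k)).1.
Definition Xi {M L : nat} (D : X -> X -> R) (delta : R)
  (w : {ffun 'I_M * 'I_L -> X * Y}) (pi : {perm 'I_M}) : R :=
  (M%:R)^-1 * (#|[set i : 'I_M | delta <= fragDist D w pi i]|)%:R.
Definition FP {M L : nat} (P : X -> Y -> R) (D : X -> X -> R) (delta xi : R)
  (dec : {ffun 'I_M * 'I_L -> X * Y} -> {perm 'I_M}) : R :=
  \sum_(w : {ffun 'I_M * 'I_L -> X * Y}) (if xi <= Xi D delta w (dec w) then prob P w else 0).

End Defs.

(* Main.v *)
Require Import Defs.
From HB Require Import structures.
From mathcomp Require Import all_boot all_order all_algebra all_fingroup.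
From mathcomp Require Import all_classical all_reals all_analysis.
From mathcomp Require Import ring lra.
Import Order.TTheory GRing.Theory Num.Theory.
Local Open Scope ring_scope.


Section Basic.
Variables (R : realType) (X Y : finType) (P : X -> Y -> R) (D : X -> X -> R).
Hypothesis P0 : forall x y, 0 <= P x y.
Hypothesis Psum : \sum_(x : X) \sum_(y : Y) P x y = 1.
Hypothesis PXpos : forall x, 0 < PX P x.

Lemma PYgX_ge0 x y : 0 <= PYgX P x y.
Proof. by rewrite /PYgX divr_ge0 // ltW. Qed.

Lemma sumPYgX x : \sum_y PYgX P x y = 1.
Proof. by rewrite /PYgX -mulr_suml -/(PX P x) divff // gt_eqF. Qed.

Lemma sqrt_le_avg (a b : R) : 0 <= a -> 0 <= b -> Num.sqrt (a * b) <= (a + b) / 2.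
Proof.
move=> a0 b0; rewrite sqrtrM //.
have ha := sqr_sqrtr a0; have hb := sqr_sqrtr b0.
have := sqrtr_ge0 a; have := sqrtr_ge0 b.
move: ha hb; set u := Num.sqrt a; set v := Num.sqrt b => ha hb v0 u0.
rewrite -ha -hb; have := sqr_ge0 (u - v); rewrite sqrrB; lra.
Qed.

Lemma bhat_ge0 x1 x2 : 0 <= bhat P x1 x2.
Proof. by apply: sumr_ge0 => y _; exact: sqrtr_ge0. Qed.

Lemma bhat_le1 x1 x2 : bhat P x1 x2 <= 1.
Proof.
rewrite /bhat; apply: le_trans (_ : _ <= \sum_y (PYgX P x1 y + PYgX P x2 y) / 2) _.
  by apply: ler_sum => y _; apply: sqrt_le_avg; exact: PYgX_ge0.
rewrite -mulr_suml big_split /= !sumPYgX; lra.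
Qed.

Lemma bhatC x1 x2 : bhat P x1 x2 = bhat P x2 x1.
Proof. by apply: eq_bigr => y _; rewrite mulrC. Qed.

Lemma dB_ge0 x1 x2 : (0 <= dB P x1 x2)%E.
Proof.
rewrite /dB; case: ifP => _; first exact: leey.
by rewrite lee_fin oppr_ge0 ln_le0 // bhat_le1.
Qed.

Lemma dQ_ge0 Q : is_pmf2 Q -> (0 <= dQ P Q)%E.
Proof.
move=> [Q0 _]; apply: sume_ge0 => z _; apply: mule_ge0; [by rewrite lee_fin | exact: dB_ge0].
Qed.

Lemma dstar_ge0 delta : (0 <= dstar P D delta)%E.
Proof.
by apply: le_ereal_inf_tmp => _ [Q [HQ _] <-]; exact: dQ_ge0.
Qed.

Lemma sumPX : \sum_x PX P x = 1. Proof. exact: Psum. Qed.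

Lemma PX_le1 x : PX P x <= 1.
Proof.
rewrite -sumPX (bigD1 x) //= lerDl; apply: sumr_ge0 => a _; exact: ltW.
Qed.

Lemma entropy_ge0 : 0 <= entropyX P.
Proof.
rewrite /entropyX -sumrN; apply: sumr_ge0 => a _.
rewrite -mulrN; apply: mulr_ge0; first exact: ltW.
by rewrite oppr_ge0 ln_le0 // PX_le1.
Qed.

Lemma sum_eq_pick (T : finType) (p : T) (f : T -> R) :
  \sum_z ((p == z)%:R * f z) = f p.
Proof.
rewrite (bigD1 p) //= eqxx mul1r big1 ?addr0 // => z zp.
by rewrite eq_sym (negbTE zp) mul0r.
Qed.

Lemma frag_bound (delta d : R) L (a b : 'I_L -> X) : (0 < L)%N ->
  delta <= (L%:R)^-1 * \sum_k D (a k) (b k) ->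
  (d%:E <= dstar P D delta)%E ->
  \prod_k bhat P (a k) (b k) <= expR (- (L%:R * d)).
Proof.
move=> L0 hD hd.
have L0' : 0 < (L%:R : R) by rewrite ltr0n.
case: (boolP [exists k, bhat P (a k) (b k) == 0]) => [/existsP [k /eqP hk]|hne].
  by rewrite (bigD1 k) //= hk mul0r ltW ?expR_gt0.
have hpos k : 0 < bhat P (a k) (b k).
  rewrite lt_neqAle bhat_ge0 andbT eq_sym.
  by apply/negP => hk; move/negP: hne; apply; apply/existsP; exists k.
pose Q := fun z : X * X => (L%:R)^-1 * \sum_k (((a k, b k) == z)%:R : R).
have Qsum : forall f : X * X -> R, \sum_z Q z * f z = (L%:R)^-1 * \sum_k f (a k, b k).
  move=> f; rewrite /Q.
  under eq_bigr do rewrite -mulrA mulr_suml.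
  rewrite -mulr_sumr exchange_big /=; congr (_ * _).
  by apply: eq_bigr => k _; rewrite sum_eq_pick.
have HQ : is_pmf2 Q.
  split.
    move=> z; rewrite /Q mulr_ge0 ?invr_ge0 ?ler0n //.
    by apply: sumr_ge0 => k _; rewrite ler0n.
  have := Qsum (fun _ => 1); under eq_bigr do rewrite mulr1.
  by move=> ->; rewrite sumr_const card_ord mulVf // gt_eqF.
have HD : delta <= DeltaQ D Q by rewrite /DeltaQ (Qsum (fun z => D z.1 z.2)).
have hinf : (dstar P D delta <= dQ P Q)%E.
  by apply: ereal_inf_lbound; exists Q; first split.
have hdQ : dQ P Q = ((L%:R)^-1 * \sum_k - ln (bhat P (a k) (b k)))%:E.
  rewrite -(Qsum (fun z => - ln (bhat P z.1 z.2))) -sumEFin /dQ.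
  apply: eq_bigr => z _; rewrite /dB.
  case: ifP => [/eqP hz|_]; last by rewrite EFinM.
  have -> : Q z = 0.
    rewrite /Q big1 ?mulr0 // => k _.
    case: eqP => // hk; exfalso; move: hz; rewrite -hk /= => hz; have := hpos k; by rewrite hz ltxx.
  by rewrite mul0e mul0r.
have hle : d <= (L%:R)^-1 * \sum_k - ln (bhat P (a k) (b k)).
  by rewrite -lee_fin -hdQ (le_trans hd hinf).
have e k : expR (ln (bhat P (a k) (b k))) = bhat P (a k) (b k).
  by apply: lnK; rewrite posrE.
rewrite (eq_bigr (fun k => expR (ln (bhat P (a k) (b k))))); last by move=> k _; rewrite e.
rewrite -expR_sum ler_expR.
have := ler_wpM2l (ltW L0') hle; rewrite mulrA mulfV ?mul1r ?gt_eqF // sumrN.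
lra.
Qed.

End Basic.


Section Main.
Variables (R : realType) (X Y : finType) (P : X -> Y -> R) (D : X -> X -> R).
Hypothesis P0 : forall x y, 0 <= P x y.
Hypothesis Psum : \sum_(x : X) \sum_(y : Y) P x y = 1.
Hypothesis PXpos : forall x, 0 < PX P x.
Variables (M L : nat) (delta xi d : R).
Local Notation I := ('I_M * 'I_L)%type.

Definition mrg (x : {ffun I -> X}) (y : {ffun I -> Y}) : {ffun I -> X * Y} :=
  [ffun j => (x j, y j)].
Definition PXs (x : {ffun I -> X}) := \prod_j PX P (x j).
Definition likp (x : {ffun I -> X}) (y : {ffun I -> Y}) := \prod_j PYgX P (x j) (y j).
Definition permx (x : {ffun I -> X}) (pi : {perm 'I_M}) : {ffun I -> X} :=
  [ffun j : I => x (pi j.1, j.2)].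
Definition fd (x : {ffun I -> X}) (pi : {perm 'I_M}) (i : 'I_M) :=
  (L%:R)^-1 * \sum_(k < L) D (x (i, k)) (x (pi i, k)).
Definition cnt x pi := #|[set i : 'I_M | delta <= fd x pi i]|.
Definition Sx x : {set {ffun I -> X}} :=
  [set xh | [exists pi : {perm 'I_M}, (xh == permx x pi) && (xi <= (M%:R)^-1 * (cnt x pi)%:R)]].

Lemma sum_split (F : {ffun I -> X * Y} -> R) :
  \sum_w F w = \sum_x \sum_y F (mrg x y).
Proof.
rewrite pair_big /=.
apply: (reindex (fun p : {ffun I -> X} * {ffun I -> Y} => mrg p.1 p.2)).
exists (fun w : {ffun I -> X * Y} => ([ffun j => (w j).1] : {ffun I -> X}, [ffun j => (w j).2] : {ffun I -> Y})) => [[x y] _|w _] /=.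
  by congr (_, _); apply/ffunP => j; rewrite !ffunE.
by apply/ffunP => j; rewrite !ffunE -surjective_pairing.
Qed.

Lemma PXs_gt0 x : 0 < PXs x.
Proof. by apply: prodr_gt0 => j _. Qed.

Lemma PXs_ge0 x : 0 <= PXs x.
Proof. exact/ltW/PXs_gt0. Qed.

Lemma likp_ge0 x y : 0 <= likp x y.
Proof. by apply: prodr_ge0 => j _; exact: PYgX_ge0. Qed.

Lemma prob_merge x y : prob P (mrg x y) = PXs x * likp x y.
Proof.
rewrite /prob /PXs /likp -big_split /=; apply: eq_bigr => j _.
by rewrite !ffunE /= /PYgX mulrC divfK // gt_eqF.
Qed.

Lemma prob_ge0 (w : {ffun I -> X * Y}) : 0 <= prob P w.
Proof. by apply: prodr_ge0 => j _. Qed.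

Lemma sum_prob x : \sum_y prob P (mrg x y) = PXs x.
Proof.
rewrite /PXs /PX bigA_distr_bigA /=; apply: eq_bigr => y _.
by rewrite /prob; apply: eq_bigr => j _; rewrite ffunE.
Qed.

Lemma sum_PXs : \sum_x PXs x = 1.
Proof.
rewrite /PXs -(bigA_distr_bigA (fun (j : I) (a : X) => PX P a)) /=.
rewrite (eq_bigr (fun _ => 1)) ?big1_eq // => j _; exact: sumPX.
Qed.

Lemma sqrt_prod (F : I -> R) : (forall i, 0 <= F i) ->
  Num.sqrt (\prod_i F i) = \prod_i Num.sqrt (F i).
Proof.
move=> F0.
suff [] : 0 <= \prod_i F i /\ Num.sqrt (\prod_i F i) = \prod_i Num.sqrt (F i) by [].
elim/big_rec2: _ => [|i a b _ [a0 <-]]; first by rewrite sqrtr1.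
by split; [apply: mulr_ge0 | rewrite sqrtrM].
Qed.

Lemma bhat_sum xh x :
  \sum_y Num.sqrt (likp xh y * likp x y) = \prod_j bhat P (xh j) (x j).
Proof.
rewrite /bhat bigA_distr_bigA /=; apply: eq_bigr => y _.
rewrite /likp -big_split /= sqrt_prod // => j.
by apply: mulr_ge0; exact: PYgX_ge0.
Qed.

Lemma Xi_merge x y pi : Xi D delta (mrg x y) pi = (M%:R)^-1 * (cnt x pi)%:R.
Proof.
rewrite /Xi /cnt; congr (_ * _%:R); apply: eq_card => i; rewrite !inE /fragDist /fd.
rewrite (eq_bigr (fun k => D (x (i,k)) (x (pi i, k)))) //.
by move=> k _; rewrite !ffunE.
Qed.

Lemma lik_merge x y pi : lik P (mrg x y) pi = likp (permx x pi) y.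
Proof. by apply: eq_bigr => j _; rewrite !ffunE. Qed.

Lemma lik1 x y : lik P (mrg x y) 1 = likp x y.
Proof. by apply: eq_bigr => -[i k] _; rewrite !ffunE perm1. Qed.

Lemma PXs_perm x pi : PXs (permx x pi) = PXs x.
Proof.
rewrite /PXs; under eq_bigr do rewrite ffunE.
have hinj : injective (fun j : I => (pi j.1, j.2)).
  by move=> [i k] [i' k'] /= [/perm_inj -> ->].
by rewrite [RHS](reindex_inj hinj).
Qed.

End Main.

Arguments mrg {X Y M L}.
Arguments PXs {R X Y} P {M L}.
Arguments likp {R X Y} P {M L}.
Arguments permx {X M L}.
Arguments fd {R X} D {M L}.
Arguments cnt {R X} D {M L}.
Arguments Sx {R X} D {M L}.


Lemma interp (R : realType) (v a b s : R) : 0 <= v -> v <= a -> v <= b -> 0 < a -> 0 < b ->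
  0 <= s <= 1 -> v <= expR ((1 - s) * ln a + s * ln b).
Proof.
move=> v0 va vb a0 b0 /andP[s0 s1].
have [->|vpos] := eqVneq v 0; first exact/ltW/expR_gt0.
have v0' : 0 < v by rewrite lt_neqAle eq_sym vpos.
have ev : expR (ln v) = v by apply: lnK; rewrite posrE.
rewrite -ev ler_expR.
have h1 : ln v <= ln a by rewrite ler_ln ?posrE.
have h2 : ln v <= ln b by rewrite ler_ln ?posrE.
nra.
Qed.

Lemma ln_prod (R : realType) (I : finType) (F : I -> R) : (forall i, 0 < F i) ->
  ln (\prod_i F i) = \sum_i ln (F i).
Proof.
move=> F0.
suff [] : 0 < \prod_i F i /\ ln (\prod_i F i) = \sum_i ln (F i) by [].
elim/big_rec2: _ => [|i a b _ [a0 <-]]; first by rewrite ln1.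
by split; [apply: mulr_gt0 | rewrite lnM ?posrE].
Qed.

Section Bound.
Variables (R : realType) (X Y : finType) (P : X -> Y -> R) (D : X -> X -> R).
Hypothesis P0 : forall x y, 0 <= P x y.
Hypothesis Psum : \sum_(x : X) \sum_(y : Y) P x y = 1.
Hypothesis PXpos : forall x, 0 < PX P x.
Variables (M L : nat) (delta xi d : R).
Local Notation I := ('I_M * 'I_L)%type.
Variable dec : {ffun I -> X * Y} -> {perm 'I_M}.
Hypothesis decML : forall w pi, lik P w pi <= lik P w (dec w).
Hypothesis Mpos : (0 < M)%N.
Hypothesis Lpos : (0 < L)%N.
Hypothesis d0 : 0 <= d.
Hypothesis hd : (d%:E <= dstar P D delta)%E.

Lemma prod_bhat_bound (x : {ffun I -> X}) pi :
  xi <= (M%:R)^-1 * (cnt D delta x pi)%:R ->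
  \prod_j bhat P (permx x pi j) (x j) <= expR (- ((M * L)%:R * (xi * d))).
Proof.
move=> hc.
have -> : \prod_j bhat P (permx x pi j) (x j) =
    \prod_i \prod_k bhat P (x (pi i, k)) (x (i, k)).
  by rewrite pair_big; apply: eq_bigr => -[i k] _; rewrite ffunE.
set S := [set i : 'I_M | delta <= fd D x pi i].
apply: le_trans (_ : _ <= \prod_i (if i \in S then expR (- (L%:R * d)) else 1)) _.
  apply: ler_prod => i _; apply/andP; split.
    by apply: prodr_ge0 => k _; exact: bhat_ge0.
  case: ifP => hi.
    rewrite (eq_bigr (fun k => bhat P (x (i, k)) (x (pi i, k)))); last by move=> k _; rewrite bhatC.
    apply: (@frag_bound _ _ _ P D delta d L (fun k => x (i,k)) (fun k => x (pi i, k)) Lpos _ hd).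
    by move: hi; rewrite inE.
  apply: prodr_ile1 => k _; rewrite bhat_ge0 //=; exact: bhat_le1.
rewrite -big_mkcond /= prodr_const -expRM_natl ler_expR.
have hc' : xi * M%:R <= (#|S|)%:R.
  have M0 : 0 < (M%:R : R) by rewrite ltr0n.
  by move: hc; rewrite mulrC ler_pdivlMr // mulrC.
have Ld : 0 <= L%:R * d by rewrite mulr_ge0 ?ler0n.
rewrite natrM.
nra.
Qed.

Definition Ax (x : {ffun I -> X}) :=
  \sum_y (if xi <= Xi D delta (mrg x y) (dec (mrg x y)) then prob P (mrg x y) else 0).

Lemma Ax_ge0 x : 0 <= Ax x.
Proof. by apply: sumr_ge0 => y _; case: ifP => // _; exact: prob_ge0. Qed.

Lemma Ax_le_PXs x : Ax x <= PXs P x.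
Proof.
rewrite -sum_prob; apply: ler_sum => y _; case: ifP => _ //; exact: prob_ge0.
Qed.

Lemma Ax_le_exp x : Ax x <= expR (- ((M * L)%:R * (xi * d))).
Proof.
set E := expR _.
have step y : (if xi <= Xi D delta (mrg x y) (dec (mrg x y)) then prob P (mrg x y) else 0)
   <= \sum_(xh in Sx D delta xi x) PXs P x * Num.sqrt (likp P xh y * likp P x y).
  case: ifP => hc; last first.
    by apply: sumr_ge0 => xh _; apply: mulr_ge0; [exact: PXs_ge0|exact: sqrtr_ge0].
  set pi := dec (mrg x y).
  rewrite Xi_merge in hc.
  have hin : permx x pi \in Sx D delta xi x.
    by rewrite inE; apply/existsP; exists pi; rewrite eqxx hc.
  rewrite (bigD1 (permx x pi)) //= (@prob_merge _ _ _ P PXpos).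
  rewrite -[X in X <= _]addr0; apply: lerD; last first.
    by apply: sumr_ge0 => xh _; apply: mulr_ge0; [exact: PXs_ge0|exact: sqrtr_ge0].
  apply: ler_wpM2l; first exact: PXs_ge0.
  have hl := decML (mrg x y) 1; rewrite lik1 lik_merge in hl.
  rewrite -[X in X <= _](ger0_norm (@likp_ge0 _ _ _ P P0 PXpos _ _ x y)) -sqrtr_sqr expr2.
  by apply: ler_wsqrtr; apply: ler_wpM2r => //; exact: likp_ge0.
apply: le_trans (ler_sum _ (fun y _ => step y)) _.
rewrite exchange_big /=.
under eq_bigr do rewrite -mulr_sumr (@bhat_sum _ _ _ P P0 PXpos).
apply: le_trans (_ : \sum_(xh in Sx D delta xi x) PXs P xh * E <= _).
  apply: ler_sum => xh; rewrite inE => /existsP [pi /andP [/eqP -> hc]].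
  rewrite PXs_perm; apply: ler_wpM2l; [exact: PXs_ge0| exact: prod_bhat_bound].
rewrite -mulr_suml -[X in _ <= X]mul1r; apply: ler_wpM2r; first exact/ltW/expR_gt0.
rewrite -(@sum_PXs _ _ _ P Psum M L) big_mkcond /=; apply: ler_sum => xh _.
by case: ifP => _ //; exact: PXs_ge0.
Qed.

Lemma FP_bound s : 0 <= s <= 1 ->
  FP P D delta xi dec <=
  ((\sum_a expR ((1 - s) * ln (PX P a))) * expR (- (s * (xi * d)))) ^+ (M * L).
Proof.
move=> hs.
rewrite /FP sum_split.
apply: le_trans (_ : \sum_x expR ((1 - s) * ln (PXs P x) + s * ln (expR (- ((M * L)%:R * (xi * d))))) <= _).
  apply: ler_sum => x _.
  exact: (@interp _ _ _ _ _ (Ax_ge0 x) (Ax_le_PXs x) (Ax_le_exp x) (@PXs_gt0 _ _ _ P PXpos M L x) (expR_gt0 _) hs).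
rewrite expRK.
under eq_bigr do rewrite expRD.
rewrite -mulr_suml exprMn; rewrite le_eqVlt; apply/orP; left; apply/eqP. congr (_ * _); last first.
  by rewrite -expRM_natl; congr expR; ring.
under eq_bigr => x _.
  rewrite /PXs ln_prod // mulr_sumr expR_sum.
  over.
rewrite -(bigA_distr_bigA (fun (j : I) (a : X) => expR ((1 - s) * ln (PX P a)))) /=.
by rewrite prodr_const card_prod !card_ord.
Qed.

End Bound.


Lemma expR_le_inv (R : realType) (t tau : R) : 0 <= t -> t <= tau -> tau < 1 ->
  expR t <= 1 + t / (1 - tau).
Proof.
move=> t0 ttau tau1.
have E0 := expR_gt0 t.
have h1 : 1 - t <= expR (- t) by have := expR_ge1Dx (- t).
have h2 : expR t * expR (- t) = 1 by rewrite expRxMexpNx_1.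
have h3 : expR t * (1 - t) <= expR t * expR (- t) by apply: ler_wpM2l => //; exact: ltW.
rewrite h2 in h3.
have u0 : 0 < 1 - tau by rewrite subr_gt0.
set v := (1 - tau)^-1.
have hv : v * (1 - tau) = 1 by rewrite /v mulVf // gt_eqF.
have v0 : 0 < v by rewrite invr_gt0.
have hv' : t * v * (1 - tau) = t by rewrite -mulrA hv mulr1.
have h5 : 0 <= t * (v * (tau - t)).
  by apply: mulr_ge0 => //; apply: mulr_ge0; [exact: ltW | rewrite subr_ge0].
have h4 : 1 <= (1 + t * v) * (1 - t) by nra.
have t1 : 0 < 1 - t by rewrite subr_gt0; exact: le_lt_trans ttau tau1.
rewrite -(ler_pM2r t1); exact: le_trans h3 h4.
Qed.

Section Choose.
Variables (R : realType) (X Y : finType) (P : X -> Y -> R).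
Hypothesis P0 : forall x y, 0 <= P x y.
Hypothesis Psum : \sum_(x : X) \sum_(y : Y) P x y = 1.
Hypothesis PXpos : forall x, 0 < PX P x.

Lemma choose_s c : entropyX P < c -> exists s, (0 <= s <= 1) /\
  \sum_a expR ((1 - s) * ln (PX P a)) < expR (s * c).
Proof.
move=> Hc.
have H0 := @entropy_ge0 _ _ _ P Psum PXpos.
have c0 : 0 < c by exact: le_lt_trans H0 Hc.
set H := entropyX P in Hc H0.
set K := \sum_a - ln (PX P a).
have lnp a : 0 <= - ln (PX P a) by rewrite oppr_ge0 ln_le0 // (@PX_le1 _ _ _ P Psum PXpos a).
have K0 : 0 <= K by apply: sumr_ge0 => a _; exact: lnp.
have hKa a : - ln (PX P a) <= K.
  by rewrite /K (bigD1 a) //= lerDl; apply: sumr_ge0 => b _; exact: lnp.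
set e := c - H.
have e0 : 0 < e by rewrite subr_gt0.
have den0 : 0 < 2 * c * (K + 1) by apply: mulr_gt0; [apply: mulr_gt0 | rewrite ltr_pwDr].
set s := e / (2 * c * (K + 1)).
have hs : s * (2 * c * (K + 1)) = e by rewrite /s divfK // gt_eqF.
have s0 : 0 < s by rewrite divr_gt0.
have sc0 : 0 < s * c by rewrite mulr_gt0.
have hs2 : s * c * K * 2 + s * c * 2 = e by rewrite -hs; ring.
have hsK : s * c * K <= e / 2 by lra.
have sK1 : s * K <= 1 / 2.
  by rewrite -(ler_pM2r c0); rewrite /e in hsK; lra.
have s1 : s <= 1.
  by rewrite -(ler_pM2r c0); rewrite /e in hs2; nra.
exists s; split; first by rewrite (ltW s0) s1.
set tau := s * K.
have tau1 : tau < 1 by rewrite /tau; lra.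
have u0 : 0 < 1 - tau by rewrite subr_gt0.
have hstep a : expR ((1 - s) * ln (PX P a)) <= PX P a * (1 + s * - ln (PX P a) / (1 - tau)).
  have -> : (1 - s) * ln (PX P a) = ln (PX P a) + s * - ln (PX P a) by ring.
  rewrite expRD lnK ?posrE //; apply: ler_wpM2l; first exact: ltW.
  apply: expR_le_inv; [by apply: mulr_ge0; [exact: ltW | exact: lnp]
    | by apply: ler_wpM2l; [exact: ltW | exact: hKa] | exact: tau1].
apply: le_lt_trans (ler_sum _ (fun a _ => hstep a)) _.
have -> : \sum_a PX P a * (1 + s * - ln (PX P a) / (1 - tau)) = 1 + s / (1 - tau) * H.
  under eq_bigr do rewrite mulrDr mulr1.
  rewrite big_split /= (@sumPX _ _ _ P Psum); congr (_ + _).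
  rewrite /H /entropyX -sumrN mulr_sumr; apply: eq_bigr => a _; ring.
apply: lt_le_trans (expR_ge1Dx _); rewrite ltrD2l.
have hHu : H / (1 - tau) < c.
  rewrite ltr_pdivrMr // /tau; rewrite /e in hsK e0; nra.
have -> : s / (1 - tau) * H = s * (H / (1 - tau)) by rewrite mulrAC mulrA.
by rewrite ltr_pM2l.
Qed.

End Choose.


Local Open Scope classical_set_scope.

Theorem theorem6 (R : realType) (X Y : finType) (P : X -> Y -> R) (D : X -> X -> R)
  (beta delta xi : R)
  (dec : forall M : nat, {ffun 'I_M * 'I_(Lfrag beta M) -> X * Y} -> {perm 'I_M}) :
  (forall x y, 0 <= P x y) ->
  \sum_(x : X) \sum_(y : Y) P x y = 1 ->
  (forall x, 0 < PX P x) ->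
  (forall x1 x2, 0 <= D x1 x2) ->
  0 < beta -> 0 < delta ->
  (forall (M : nat) (w : {ffun 'I_M * 'I_(Lfrag beta M) -> X * Y}) (pi : {perm 'I_M}),
      lik P w pi <= lik P w (dec M w)) ->
  beta * entropyX P < 1 ->
  ((entropyX P)%:E < xi%:E * dstar P D delta)%E ->
  (fun M : nat => FP P D delta xi (dec M)) @ \oo --> 0.
Proof.
move=> P0 Psum PXpos D0 beta0 delta0 decML Hbeta Hxi.
have H0 := @entropy_ge0 _ _ _ P Psum PXpos.
have ds0 := @dstar_ge0 _ _ _ P D P0 PXpos delta.
have [d [d0 [hd Hd]]] : exists d : R,
    0 <= d /\ (d%:E <= dstar P D delta)%E /\ entropyX P < xi * d.
  move: Hxi ds0; case: (dstar P D delta) => [r| |] Hxi ds0.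
  - exists r; split; first by rewrite -lee_fin.
    by split => //; rewrite -lte_fin EFinM.
  - have xi0 : 0 < xi.
      move: Hxi; rewrite mulry; have [xi0|xi0|->] := ltrgtP xi 0 => //.
        by rewrite ltr0_sg // mulN1e ltNge leNye.
      by rewrite sgr0 mul0e lte_fin ltNge H0.
    exists ((entropyX P + 1) / xi); split.
      by rewrite divr_ge0 // ltW // ltr_pwDr.
    split; first exact: leey.
    by rewrite mulrC divfK ?gt_eqF //; lra.
  - by move: ds0; rewrite leeNy_eq.
have [s [hs hlt]] := @choose_s _ _ _ P Psum PXpos (xi * d) Hd.
set G := \sum_a expR ((1 - s) * ln (PX P a)) in hlt.
set r := G * expR (- (s * (xi * d))).
have G0 : 0 <= G by apply: sumr_ge0 => a _; exact/ltW/expR_gt0.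
have r0 : 0 <= r by rewrite mulr_ge0 // ltW ?expR_gt0.
have r1 : r < 1.
  have : r < expR (s * (xi * d)) * expR (- (s * (xi * d))) by rewrite ltr_pM2r ?expR_gt0.
  by rewrite expRxMexpNx_1.
apply: (squeeze_cvgr (f := fun _ => 0) (h := fun M => r ^+ M)); last first.
- have -> : (fun M => r ^+ M) = geometric 1 r by apply/funext => n; rewrite /geometric /= mul1r.
  by apply: cvg_geometric; rewrite ger0_norm.
- first [ exact: cvgr_cst | apply: cvg_cst; exact: eventually_filter | exact: (@cvg_cst R^o 0 nat \oo eventually_filter) | exact: (@cvg_cst _ 0 _ _ eventually_filter) ].
near=> M.
have M2 : (2 <= M)%N by near: M; exists 2%N.
have Mpos : (0 < M)%N by apply: leq_trans M2.
have Lpos : (0 < Lfrag beta M)%N.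
  have lnM0 : 0 < ln (M%:R : R) by apply: ln_gt0; rewrite ltr1n.
  have hc : 0 < Num.ceil (beta * ln (M%:R : R)) by rewrite ceil_gt0 mulr_gt0.
  by rewrite /Lfrag absz_gt0 gt_eqF.
apply/andP; split.
  apply: sumr_ge0 => w _; case: ifP => // _.
  by apply: prodr_ge0 => j _; exact: P0.
apply: le_trans (@FP_bound _ _ _ P D P0 Psum PXpos M (Lfrag beta M) delta xi d (dec M) (decML M) Mpos Lpos d0 hd s hs) _.
rewrite -/G -/r.
apply: ler_wiXn2l => //; first exact: ltW.
by rewrite leq_pmulr.
Unshelve. all: by end_near.
Qed.
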